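(* If $X$ and $Y$ are metric spaces with asymptotic property C, then the product $X\times Y$ has asymptotic property C.
   Context: For $R>0$, a family $\mathcal U$ of nonempty subsets of a metric space is $R$-disjoint if $d(A,B)>R$ for all distinct $A,B\in\mathcal U$, where $d(A,B)=\inf\{d(a,b):a\in A,b\in B\}$. A family $\mathcal U$ is uniformly bounded if $\sup\{\operatorname{diam}U:U\in\mathcal U\}<\infty$. A metric space $X$ has asymptotic property C if for every sequence $R_0\le R_1\le R_2\le\cdots$ of positive reals there exist $n\ge 0$ and uniformly bounded $R_i$-disjoint families $\mathcal U_i$ ($i=0,\dots,n$) of subsets of $X$ such that $\bigcup_{i=0}^n\mathcal U_i$ covers $X$. The product $X\times Y$ carries any of the standard product metrics (e.g. $d((x,y),(x',y'))=\max(d_X(x,x'),d_Y(y,y'))$ or the sum metric; these are bi-Lipschitz equivalent). *)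

(* Defs.v *)
From Stdlib Require Import Lra.
From Stdlib Require Import Reals.
Open Scope R_scope.

Record MetricSpace := {
  mcarrier :> Type;
  mdist : mcarrier -> mcarrier -> R;
  mdist_nonneg : forall x y, 0 <= mdist x y;
  mdist_eq0 : forall x y, mdist x y = 0 <-> x = y;
  mdist_sym : forall x y, mdist x y = mdist y x;
  mdist_tri : forall x y z, mdist x z <= mdist x y + mdist y z
}.

(* d(A,B) = inf {d(a,b) : a in A, b in B} > R  iff there is r > R that is a
   lower bound of all distances d(a,b), a in A, b in B. *)
Definition setdist_gt {X : MetricSpace} (A B : X -> Prop) (R0 : R) : Prop :=
  exists r, R0 < r /\ forall a b, A a -> B b -> r <= mdist X a b.

Definition R_disjoint {X : MetricSpace} (R0 : R) (U : (X -> Prop) -> Prop) : Prop :=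
  (forall A, U A -> exists x, A x) /\
  (forall A B, U A -> U B -> A <> B -> setdist_gt A B R0).

Definition uniformly_bounded {X : MetricSpace} (U : (X -> Prop) -> Prop) : Prop :=
  exists D, forall A, U A -> forall a b, A a -> A b -> mdist X a b <= D.

Definition asymptotic_property_C (X : MetricSpace) : Prop :=
  forall Rs : nat -> R,
    (forall i, 0 < Rs i) -> (forall i, Rs i <= Rs (S i)) ->
    exists (n : nat) (U : nat -> (X -> Prop) -> Prop),
      (forall i, (i <= n)%nat -> uniformly_bounded (U i) /\ R_disjoint (Rs i) (U i)) /\
      (forall x : X, exists i A, (i <= n)%nat /\ U i A /\ A x).

Definition prod_dist (X Y : MetricSpace) (p q : X * Y) : R :=
  Rmax (mdist X (fst p) (fst q)) (mdist Y (snd p) (snd q)).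

Lemma prod_dist_nonneg X Y : forall p q, 0 <= prod_dist X Y p q.
Proof. intros p q; unfold prod_dist; eapply Rle_trans; [apply mdist_nonneg|apply Rmax_l]. Qed.

Lemma prod_dist_eq0 X Y : forall p q, prod_dist X Y p q = 0 <-> p = q.
Proof.
  intros [x1 y1] [x2 y2]; unfold prod_dist; simpl; split.
  - intros H.
    assert (H1 := Rmax_l (mdist X x1 x2) (mdist Y y1 y2)).
    assert (H2 := Rmax_r (mdist X x1 x2) (mdist Y y1 y2)).
    assert (E1 : mdist X x1 x2 = 0) by (pose proof (mdist_nonneg X x1 x2); lra).
    assert (E2 : mdist Y y1 y2 = 0) by (pose proof (mdist_nonneg Y y1 y2); lra).
    apply mdist_eq0 in E1; apply mdist_eq0 in E2; subst; reflexivity.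
  - intros H; inversion H; subst.
    rewrite (proj2 (mdist_eq0 X x2 x2) eq_refl), (proj2 (mdist_eq0 Y y2 y2) eq_refl).
    apply Rmax_left; lra.
Qed.

Lemma prod_dist_sym X Y : forall p q, prod_dist X Y p q = prod_dist X Y q p.
Proof. intros; unfold prod_dist; rewrite (mdist_sym X), (mdist_sym Y); reflexivity. Qed.

Lemma prod_dist_tri X Y : forall p q r, prod_dist X Y p r <= prod_dist X Y p q + prod_dist X Y q r.
Proof.
  intros p q r; unfold prod_dist.
  pose proof (mdist_tri X (fst p) (fst q) (fst r)).
  pose proof (mdist_tri Y (snd p) (snd q) (snd r)).
  pose proof (Rmax_l (mdist X (fst p) (fst q)) (mdist Y (snd p) (snd q))).
  pose proof (Rmax_r (mdist X (fst p) (fst q)) (mdist Y (snd p) (snd q))).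
  pose proof (Rmax_l (mdist X (fst q) (fst r)) (mdist Y (snd q) (snd r))).
  pose proof (Rmax_r (mdist X (fst q) (fst r)) (mdist Y (snd q) (snd r))).
  apply Rmax_lub; lra.
Qed.

Definition ProdMetric (X Y : MetricSpace) : MetricSpace :=
  {| mcarrier := X * Y; mdist := prod_dist X Y;
     mdist_nonneg := prod_dist_nonneg X Y; mdist_eq0 := prod_dist_eq0 X Y;
     mdist_sym := prod_dist_sym X Y; mdist_tri := prod_dist_tri X Y |}.

(* Main.v *)
Require Import Defs.
From Stdlib Require Import Reals.
From Stdlib Require Import Arith Lra Lia Classical ClassicalEpsilon.
Open Scope R_scope.

Lemma choice_fun {A B : Type} (P : A -> B -> Prop) :
  (forall a, exists b, P a b) -> exists f, forall a, P a (f a).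
Proof.
  intros H. exists (fun a => proj1_sig (constructive_indefinite_description _ (H a))).
  intro a. exact (proj2_sig (constructive_indefinite_description _ (H a))).
Qed.

Fixpoint stf (M : nat -> nat) (i : nat) : nat :=
  match i with 0 => 0%nat | S i => (stf M i + M (stf M i) + 1)%nat end.

Lemma stf_lt M : forall i d, (stf M i + M (stf M i) < stf M (i + S d))%nat.
Proof.
  intros i d; induction d.
  - rewrite Nat.add_1_r; simpl; lia.
  - replace (i + S (S d))%nat with (S (i + S d)) by lia. simpl. lia.
Qed.

Lemma stf_le M : forall i n, (i <= n)%nat ->
  (stf M i + M (stf M i) <= stf M n + M (stf M n))%nat.
Proof.
  intros i n H. destruct (Nat.eq_dec i n) as [->|Hne]; [lia|].
  assert (exists d, n = (i + S d)%nat) as [d ->] by (exists (n - i - 1)%nat; lia).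
  pose proof (stf_lt M i d). lia.
Qed.

Lemma stf_uniq M : forall i j i' j', (j <= M (stf M i))%nat -> (j' <= M (stf M i'))%nat ->
  (stf M i + j = stf M i' + j')%nat -> i = i'.
Proof.
  intros i j i' j' H1 H2 H3.
  destruct (lt_eq_lt_dec i i') as [[Hl|He]|Hl]; auto.
  - assert (exists d, i' = (i + S d)%nat) as [d ->] by (exists (i' - i - 1)%nat; lia).
    pose proof (stf_lt M i d). lia.
  - assert (exists d, i = (i' + S d)%nat) as [d ->] by (exists (i - i' - 1)%nat; lia).
    pose proof (stf_lt M i' d). lia.
Qed.

Lemma mono_le (Rs : nat -> R) : (forall i, Rs i <= Rs (S i)) ->
  forall a b, (a <= b)%nat -> Rs a <= Rs b.
Proof.
  intros H a b Hab. induction Hab; [lra|]. eapply Rle_trans; [apply IHHab| apply H].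
Qed.

Theorem theorem3p1 (X Y : MetricSpace) :
  asymptotic_property_C X -> asymptotic_property_C Y ->
  asymptotic_property_C (ProdMetric X Y).
Proof.
  intros HX HY Rs Hpos Hmono.
  assert (HYs : forall t : nat, exists p : nat * (nat -> (Y -> Prop) -> Prop),
    (forall j, (j <= fst p)%nat -> uniformly_bounded (snd p j) /\
        R_disjoint (Rs (t + j)%nat) (snd p j)) /\
    (forall y : Y, exists j A, (j <= fst p)%nat /\ snd p j A /\ A y)).
  { intro t. destruct (HY (fun j => Rs (t + j)%nat)) as [m [V [H1 H2]]].
    - intro; apply Hpos.
    - intro j. rewrite Nat.add_succ_r. apply Hmono.
    - exists (m, V). simpl. split; assumption. }
  apply choice_fun in HYs as [f Hf].
  set (M := fun t => fst (f t)). set (V := fun t => snd (f t)).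
  set (r := fun i => Rs (stf M i + M (stf M i))%nat).
  destruct (HX r) as [n [U [HU Hcov]]].
  { intro; apply Hpos. }
  { intro i. unfold r. apply mono_le; auto. simpl. lia. }
  exists (stf M n + M (stf M n))%nat.
  exists (fun k (W : ProdMetric X Y -> Prop) => exists i j U0 V0,
    (i <= n)%nat /\ (j <= M (stf M i))%nat /\ k = (stf M i + j)%nat /\
    U i U0 /\ V (stf M i) j V0 /\ W = (fun p => U0 (fst p) /\ V0 (snd p))).
  split.
  - intros k Hk. split.
    + destruct (classic (exists i j, (i <= n)%nat /\ (j <= M (stf M i))%nat /\
         k = (stf M i + j)%nat)) as [[i [j [Hi [Hj Hk']]]]|Hno].
      * destruct (HU i Hi) as [[B HB] _].
        destruct (Hf (stf M i)) as [HV _].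
        destruct (HV j Hj) as [[D HD] _].
        exists (Rmax B D). intros W [i' [j' [U0 [V0 [Hi' [Hj' [Hk2 [HU0 [HV0 ->]]]]]]]]].
        assert (i' = i) by (eapply stf_uniq; [exact Hj'|exact Hj|lia]). subst i'.
        assert (j' = j) by lia. subst j'.
        intros a b [Ha1 Ha2] [Hb1 Hb2]. simpl. unfold prod_dist.
        apply Rmax_lub.
        -- eapply Rle_trans; [apply (HB U0 HU0); auto| apply Rmax_l].
        -- eapply Rle_trans; [apply (HD V0 HV0); auto| apply Rmax_r].
      * exists 0. intros W [i' [j' [U0 [V0 [Hi' [Hj' [Hk2 _]]]]]]].
        exfalso; apply Hno; eauto.
    + split.
      * intros W [i [j [U0 [V0 [Hi [Hj [Hk2 [HU0 [HV0 ->]]]]]]]]].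
        destruct (HU i Hi) as [_ [HUne _]].
        destruct (Hf (stf M i)) as [HV _].
        destruct (HV j Hj) as [_ [HVne _]].
        destruct (HUne U0 HU0) as [x Hx]. destruct (HVne V0 HV0) as [y Hy].
        exists (x, y). simpl. auto.
      * intros W1 W2 [i [j [U1 [V1 [Hi [Hj [Hk1 [HU1 [HV1 ->]]]]]]]]]
          [i' [j' [U2 [V2 [Hi' [Hj' [Hk2 [HU2 [HV2 ->]]]]]]]]] Hne.
        assert (i' = i) by (eapply stf_uniq; [exact Hj'|exact Hj|lia]). subst i'.
        assert (j' = j) by lia. subst j'. subst k.
        destruct (classic (U1 = U2)) as [EU|NU].
        -- subst U2. assert (NV : V1 <> V2) by (intro; subst; apply Hne; reflexivity).
           destruct (Hf (stf M i)) as [HV _].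
           destruct (HV j Hj) as [_ [_ Hdis]].
           destruct (Hdis V1 V2 HV1 HV2 NV) as [rr [Hrr Hd]].
           exists rr. split; [exact Hrr|].
           intros a b [_ Ha] [_ Hb]. simpl. unfold prod_dist.
           eapply Rle_trans; [apply Hd; [exact Ha|exact Hb]| apply Rmax_r].
        -- destruct (HU i Hi) as [_ [_ Hdis]].
           destruct (Hdis U1 U2 HU1 HU2 NU) as [rr [Hrr Hd]].
           exists rr. split.
           ++ eapply Rle_lt_trans; [|exact Hrr]. unfold r. apply mono_le; auto. lia.
           ++ intros a b [Ha _] [Hb _]. simpl. unfold prod_dist.
              eapply Rle_trans; [apply Hd; [exact Ha|exact Hb]| apply Rmax_l].
  - intros [x y].
    destruct (Hcov x) as [i [U0 [Hi [HU0 Hx]]]].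
    destruct (Hf (stf M i)) as [_ HVc].
    destruct (HVc y) as [j [V0 [Hj [HV0 Hy]]]].
    exists (stf M i + j)%nat, (fun p : X * Y => U0 (fst p) /\ V0 (snd p)).
    split; [|split].
    + pose proof (stf_le M i n Hi). unfold M in *. lia.
    + exists i, j, U0, V0. repeat split; auto.
    + simpl; auto.
Qed.
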